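(* Let $G$ be a planar graph that is a subgraph of some plane triangulation $T$ whose geometric dual $T^*$ admits a $2$-factor consisting of at most two cycles. Then $\chi_1(G) \le 2$.
   Context: All graphs are finite and simple. A mapping $f : V(G) \to E(G) \cup \{\emptyset\}$ is a $1$-selection of $G$ if for every $v \in V(G)$ either $f(v)$ is an edge incident with $v$ or $f(v) = \emptyset$. The graph $G_f$ is obtained from $G$ by deleting all edges in $f(V(G))$. The robust chromatic number is $\chi_1(G) = \min_f \chi(G_f)$ over all $1$-selections $f$ of $G$. A plane triangulation is a simple plane graph in which every face is bounded by a $3$-cycle. The geometric dual $T^*$ of a plane graph $T$ has a vertex for each face of $T$ and, for each edge $e$ of $T$, an edge joining the vertices corresponding to the two faces incident with $e$ (it may be a multigraph). A $2$-factor is a $2$-regular spanning subgraph. *)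

(* Defs.v *)
(* Plane triangulations are represented by combinatorial
   maps (rotation systems) of Euler genus 0. *)
From mathcomp Require Import all_boot.
Set Implicit Arguments. Unset Strict Implicit. Unset Printing Implicit Defensive.

Definition simple_graph (V : finType) (adj : rel V) : Prop :=
  symmetric adj /\ irreflexive adj.

(* A 1-selection: f v = Some w means f(v) is the edge vw (incident with v);
   f v = None means f(v) = emptyset. *)
Definition one_selection (V : finType) (adj : rel V) (f : V -> option V) : Prop :=
  forall v w, f v = Some w -> adj v w.

Definition deleted (V : finType) (f : V -> option V) (u v : V) : bool :=
  (f u == Some v) || (f v == Some u).

Definition sel_graph (V : finType) (adj : rel V) (f : V -> option V) : rel V :=
  fun u v => adj u v && ~~ deleted f u v.

Definition k_colorable (V : finType) (adj : rel V) (k : nat) : Prop :=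
  exists c : V -> 'I_k, forall u v, adj u v -> c u != c v.

Definition robust_chi_le (V : finType) (adj : rel V) (k : nat) : Prop :=
  exists f, one_selection adj f /\ k_colorable (sel_graph adj f) k.

Definition is_subgraph (VG VH : finType) (adjG : rel VG) (adjH : rel VH) : Prop :=
  exists h : VG -> VH, injective h /\ forall x y, adjG x y -> adjH (h x) (h y).

(* Darts D; nd = rotation of darts around their vertex; ed = edge involution;
   vx d = the vertex (of type V) at the tail of dart d.
   Faces are the orbits of face_perm = nd \o ed. *)

Definition face_perm (D : finType) (nd ed : D -> D) : D -> D := fun d => nd (ed d).

Definition dart_link (D : finType) (nd ed : D -> D) : rel D :=
  fun x y => (y == nd x) || (y == ed x).

Definition map_adj (V D : finType) (ed : D -> D) (vx : D -> V) : rel V :=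
  fun u v => [exists d, (vx d == u) && (vx (ed d) == v)].

(* (nd, ed, vx) is a plane triangulation on the vertex set V:
   a connected rotation system of genus 0 (Euler's formula V - E + F = 2,
   with E = |D|/2), whose faces all have length 3, and whose underlying
   graph is simple (no loops, no parallel edges). *)
Definition plane_triangulation (V D : finType) (nd ed : D -> D) (vx : D -> V) : Prop :=
  [/\ injective nd,
      involutive ed /\ (forall d, ed d != d),
      (forall d d', (vx d == vx d') = fconnect nd d d') /\ (forall v, exists d, vx d = v),
      (forall d d', connect (dart_link nd ed) d d')
        /\ 2 * #|V| + 2 * fcard (face_perm nd ed) (predT : {pred D}) = #|D| + 4 &
      (forall d, order (face_perm nd ed) d = 3)
        /\ (forall d, vx (ed d) != vx d)
        /\ (forall d d', vx d = vx d' -> vx (ed d) = vx (ed d') -> d = d')].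

(* S (a set of darts closed under ed, i.e. a set of edges of T, equivalently
   of edges of the dual T^* ) is a 2-factor of the geometric dual T^*:
   every face (dual vertex) has degree exactly 2 in S.  The degree of the face
   of d0 is the number of darts of S lying on that face (a dual loop counts 2). *)
Definition dual_two_factor (D : finType) (nd ed : D -> D) (S : {set D}) : Prop :=
  (forall d, (d \in S) = (ed d \in S)) /\
  (forall d0, #|[set d in S | fconnect (face_perm nd ed) d0 d]| = 2).

(* connectivity in the 2-factor S of T^*, lifted to darts *)
Definition factor_link (D : finType) (nd ed : D -> D) (S : {set D}) : rel D :=
  fun x y => fconnect (face_perm nd ed) x y || ((x \in S) && (y == ed x)).

Definition at_most_cycles (D : finType) (nd ed : D -> D) (S : {set D}) (n : nat) : Prop :=
  exists s : seq D, size s <= n /\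
    forall d, has (fun x => connect (factor_link nd ed S) x d) s.

(* Main.v *)
Require Import Defs.
From mathcomp Require Import all_boot all_algebra ring zify.
Set Implicit Arguments. Unset Strict Implicit. Unset Printing Implicit Defensive.
Import GRing.Theory.

Definition b2f (b : bool) : 'F_2 := (b%:R)%R.

Lemma sum_eqn (n : nat) (a : 'I_n) : (\sum_(j < n) (a == j) = 1)%N.
Proof.
rewrite (bigD1 a) //= eqxx big1 // => j Hj; by rewrite eq_sym (negbTE Hj).
Qed.

Section Graph.
Variables (m n : nat) (u w : 'I_m -> 'I_n).
Hypothesis uw : forall i, u i != w i.

Definition ginc : 'M['F_2]_(m, n) := \matrix_(i, j) (b2f (u i == j) + b2f (w i == j))%R.
Definition incid (i : 'I_m) (j : 'I_n) := (u i == j) || (w i == j).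
Definition deg (R : {set 'I_m}) j := #|[set i in R | incid i j]|.

Lemma handshake R : (\sum_j deg R j = 2 * #|R|)%N.
Proof.
rewrite /deg.
have E : forall j, (#|[set i in R | incid i j]| = \sum_(i in R) (if incid i j then 1 else 0))%N.
  by move=> j; rewrite -sum1_card -big_mkcondr; apply: eq_bigl => i; rewrite inE.
under eq_bigr do rewrite E.
rewrite exchange_big /= -sum1_card big_distrr /=; apply: eq_bigr => i _.
have -> : (\sum_j (if incid i j then 1 else 0) = \sum_j ((u i == j) + (w i == j)))%N.
  apply: eq_bigr => j _; rewrite /incid; case: (u i =P j) => [<-|] /=; last by case: eqP.
  by rewrite eq_sym (negbTE (uw i)).
by rewrite big_split /= !sum_eqn muln1.
Qed.

Local Open Scope ring_scope.

Lemma b2f_mul (c : bool) (x : 'F_2) : b2f c * x = if c then x else 0.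
Proof. by case: c; rewrite /b2f ?mul1r ?mul0r. Qed.

Lemma sum_pick_in (T : finType) (A : {pred T}) (F : T -> 'F_2) w0 :
  \sum_(v in A) b2f (w0 == v) * F v = if w0 \in A then F w0 else 0.
Proof.
under eq_bigr do rewrite b2f_mul.
rewrite -big_mkcondr /=; case: ifP => Hw.
  rewrite (big_pred1 w0) // => v /=; rewrite eq_sym; case: (v =P w0) => [->|_]; [by rewrite Hw | by rewrite andbF].
rewrite big_pred0 // => v; apply/negbTE/andP => -[Hv /eqP E]; move: Hw; by rewrite E Hv.
Qed.

Lemma sum_pick (T : finType) (F : T -> 'F_2) w0 : \sum_v b2f (w0 == v) * F v = F w0.
Proof. by rewrite sum_pick_in. Qed.

Lemma sum_set_ev n0 (X : {set 'I_n0}) (F : 'I_n0 -> 'F_2) : \sum_(i < #|X|) F (enum_val i) = \sum_(j in X) F j.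
Proof.
transitivity (\sum_(j in X | xpredT j) F j); last by apply: eq_bigl => j; rewrite andbT.
by rewrite (big_enum_val_cond (A := pred_of_set X)).
Qed.

Lemma F2_1p1 : (1 + 1 : 'F_2) = 0. Proof. exact: val_inj. Qed.

Lemma exists_cycle R : R != set0 -> (#|[set j | (0 < deg R j)%N]| <= #|R|)%N ->
  exists2 z : 'rV['F_2]_m, (z *m ginc = 0) /\ (forall i, i \notin R -> z 0 i = 0) & z != 0.
Proof.
move=> RN HX; set X := [set j | (0 < deg R j)%N].
have inX : forall e, e \in R -> (u e \in X) && (w e \in X).
  move=> e He; rewrite !inE /deg !card_gt0; apply/andP; split; apply/set0Pn; exists e;
  by rewrite !inE He /incid eqxx ?orbT.
have [e0 He0] := set0Pn _ RN.
set x0 := u e0.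
have Hx0 : x0 \in X by case/andP: (inX _ He0).
set X' := X :\ x0.
have cX : #|X| = #|X'|.+1 by rewrite (cardsD1 x0 X) Hx0.
set k := #|R|.
pose er : 'I_k -> 'I_m := enum_val (A := R).
have erR : forall a, er a \in R by move=> a; exact: enum_valP.
pose Sel : 'M['F_2]_(k, m) := \matrix_(a, i) b2f (er a == i).
pose M := Sel *m ginc.
have ME : forall a j, M a j = ginc (er a) j.
  by move=> a j; rewrite [LHS]mxE -[RHS](sum_pick (fun i => ginc i j) (er a)); apply: eq_bigr => i _; rewrite [Sel _ _]mxE.
pose p := #|X'|.
pose ex : 'I_p -> 'I_n := enum_val (A := X').
pose J : 'M['F_2]_(p, n) := \matrix_(b, j) (b2f (ex b == j) + b2f (x0 == j)).
pose M' : 'M['F_2]_(k, p) := \matrix_(a, b) M a (ex b).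
have MJ : M = M' *m J.
  apply/matrixP => a j; rewrite [RHS]mxE.
  under eq_bigr do rewrite [M' _ _]mxE [J _ _]mxE mulrDr.
  rewrite big_split /=.
  rewrite (sum_set_ev X' (fun j' => M a j' * b2f (j' == j))).
  rewrite (sum_set_ev X' (fun j' => M a j' * b2f (x0 == j))).
  rewrite -big_distrl /=.
  have -> : \sum_(j' in X') M a j' * b2f (j' == j) = if j \in X' then M a j else 0.
    rewrite -sum_pick_in; apply: eq_bigr => j' _; rewrite mulrC eq_sym //.
  have -> : \sum_(j' in X') M a j' = M a x0.
    have -> : \sum_(j' in X') M a j' = \sum_(j' in X') (b2f (u (er a) == j') + b2f (w (er a) == j')).
      by apply: eq_bigr => j' _; rewrite ME mxE.
    rewrite big_split /=.
    have Hs : forall b0 : 'I_n, \sum_(j' in X') b2f (b0 == j') = if b0 \in X' then 1 else 0.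
      move=> b0; rewrite -(sum_pick_in _ (fun _ => 1)); apply: eq_bigr => ? _; by rewrite mulr1.
    rewrite !Hs ME mxE !inE.
    have /andP[Hu Hw] := inX _ (erR a).
    move: Hu Hw; rewrite !inE => -> ->; rewrite !andbT; have Huw := uw (er a).
    case: (u (er a) =P x0) => [Hux|Hux]; case: (w (er a) =P x0) => [Hwx|Hwx] /=.
    - by move: Huw; rewrite Hux Hwx eqxx.
    - by rewrite /b2f /= addr0 add0r.
    - by rewrite /b2f /= addr0 add0r.
    - by rewrite /b2f /= addr0 F2_1p1.
  rewrite !inE; case: (j =P x0) => [->|Hj] /=.
    by rewrite eqxx /b2f mulr1 add0r.
  rewrite (_ : (x0 == j) = false) ?/b2f ?mulr0 ?addr0; last by apply/eqP => E; apply: Hj.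
  case: ifP => // HjX; rewrite ME mxE.
  have /andP[Hu Hw] := inX _ (erR a).
  case: (u (er a) =P j) => [E|_]; first by move: Hu; rewrite E inE HjX.
  case: (w (er a) =P j) => [E|_]; first by move: Hw; rewrite E inE HjX.
  by rewrite /b2f addr0.
have rM : (\rank M < k)%N.
  rewrite MJ; apply: leq_ltn_trans (mxrankM_maxl _ _) _.
  apply: leq_ltn_trans (rank_leq_col _) _; rewrite /p; move: HX; rewrite -/X cX; by [].
have KN : kermx M != 0.
  rewrite -mxrank_eq0 mxrank_ker subn_eq0 -ltnNge; exact: rM.
have [r Hr] : exists r, row r (kermx M) != 0.
  apply/existsP; apply: contraR KN => /existsPn H; apply/eqP/row_matrixP => r.
  by rewrite row0; apply/eqP; exact: negbNE (H r).
set q := row r (kermx M).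
have Hq : q *m M = 0 by apply/sub_kermxP; exact: row_sub.
exists (q *m Sel).
  split; first by rewrite -mulmxA.
  move=> i Hi; rewrite mxE big1 // => a _; rewrite mxE.
  rewrite !mxE mulrC b2f_mul; case: (er a =P i) => [E|//]; by move: Hi; rewrite -E erR.
apply: contraNneq Hr => E; apply/eqP/rowP => a; rewrite [RHS]mxE -/q.
have := congr1 (fun z : 'rV_m => z 0 (er a)) E; rewrite [X in X = _ -> _]mxE [X in _ = X -> _]mxE => <-.
rewrite (bigD1 a) //= [Sel _ _]mxE eqxx /b2f mulr1 big1 ?addr0 // => a' Ha'.
rewrite [Sel _ _]mxE (inj_eq enum_val_inj) (negbTE Ha') mulr0 //.
Qed.

Definition acyclic (R : {set 'I_m}) := forall z : 'rV['F_2]_m,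
  z *m ginc = 0 -> (forall i, i \notin R -> z 0 i = 0) -> z = 0.

Lemma acyclicS (R R' : {set 'I_m}) : R' \subset R -> acyclic R -> acyclic R'.
Proof.
move=> sub H z Hz Hs; apply: H => // i Hi; apply: Hs.
by apply: contra Hi => /(subsetP sub).
Qed.

Lemma leaf R a : acyclic R -> R != set0 -> exists2 j, j != a & deg R j = 1%N.
Proof.
move=> Hac RN.
case: (pickP (fun j => (j != a) && (deg R j == 1%N))) => [j /andP[H1 /eqP H2]|H]; first by exists j.
exfalso.
set X := [set j | (0 < deg R j)%N].
have HX : (#|X| <= #|R|)%N.
  have : (\sum_j (2 * (j \in X)) <= \sum_j (deg R j + (j == a)))%N.
    apply: leq_sum => j _; rewrite inE.
    case: (posnP (deg R j)) => [->|Hp] //=.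
    case: (j =P a) => [_|Hja] /=; first by lia.
    have Hja2 : (j != a) by apply/eqP.
    have := H j; rewrite /= Hja2 /= => /eqP; lia.
  have E1 : (\sum_j (deg R j + (j == a)) = 2 * #|R| + 1)%N.
    rewrite big_split /= handshake; congr (_ + _)%N.
    by rewrite -(sum_eqn a); apply: eq_bigr => j _; rewrite eq_sym.
  have E2 : (\sum_j (2 * (j \in X)) = 2 * #|X|)%N.
    rewrite (eq_bigr (fun j => if j \in X then 2 else 0)%N); last by move=> j _; case: (j \in X).
    by rewrite -big_mkcond sum_nat_const mulnC.
  rewrite E1 E2; lia.
have [z [Hz Hs] zN] := exists_cycle RN HX.
by move: zN; rewrite (Hac z Hz Hs) eqxx.
Qed.

Lemma forest_sel R a : acyclic R -> exists sel : 'I_n -> option 'I_m,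
  (forall j i, sel j = Some i -> [/\ i \in R, incid i j & j != a]) /\
  (forall i, i \in R -> exists j, sel j = Some i).
Proof.
elim: {R}_.+1 {-2}R (ltnSn #|R|) => // N IH R HN Hac.
have [->|RN] := eqVneq R set0.
  by exists (fun _ => None); split => // i; rewrite inE.
have [j Hja Hdeg] := leaf a Hac RN.
have [i0 Hi0] : exists i0, [set i in R | incid i j] = [set i0] by apply/cards1P; apply/eqP; exact: Hdeg.
have Hi0R : i0 \in R /\ incid i0 j.
  have : i0 \in [set i in R | incid i j] by rewrite Hi0 set11.
  by rewrite inE => /andP.
have Honly : forall i, i \in R -> incid i j -> i = i0.
  by move=> i HiR Hij; apply/set1P; rewrite -Hi0 inE HiR.
set R' := R :\ i0.
have HR' : (#|R'| < N)%N.
  have := cardsD1 i0 R; rewrite (proj1 Hi0R) add1n -/R' => E; move: HN; rewrite E; lia.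
have Hac' : acyclic R' by apply: acyclicS Hac; exact: subD1set.
have [sel' [H1 H2]] := IH R' HR' Hac'.
exists (fun j' => if j' == j then Some i0 else sel' j'); split.
  move=> j' i; case: (j' =P j) => [-> [<-]|_ /H1 [HiR' Hinc Hna]].
    by case: Hi0R.
  by split => //; move: HiR'; rewrite inE => /andP[].
move=> i HiR; case: (i =P i0) => [->|Hne].
  by exists j; rewrite eqxx.
have HiR' : i \in R' by rewrite !inE HiR andbT; exact/eqP.
have [j' Hj'] := H2 i HiR'; exists j'.
case: (j' =P j) => [E|//]; subst j'.
have [_ Hinc _] := H1 _ _ Hj'.
by move: Hne; rewrite (Honly i HiR Hinc).
Qed.
End Graph.

Local Open Scope ring_scope.

Lemma addff (x : 'F_2) : x + x = 0.
Proof. case: x => [[|[|//]]] Hi; exact: val_inj. Qed.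


Lemma F2_tri (x y z : 'F_2) : (x + y) + (y + z) + (z + x) = 0.
Proof.
have -> : (x + y) + (y + z) + (z + x) = (x + x) + (y + y) + (z + z) by ring.
by rewrite !addff; ring.
Qed.

Lemma F2_eq (x y : 'F_2) : x + y = 0 -> x = y.
Proof.
move=> H; have -> : x = x + (y + y) by rewrite addff addr0.
by rewrite addrA H add0r.
Qed.

Lemma sum_ev (T : finType) (F : T -> 'F_2) : \sum_(i < #|T|) F (enum_val i) = \sum_x F x.
Proof.
rewrite [RHS](reindex (@enum_val T (pred_of_simpl predT))) //.
by exists enum_rank => x _; rewrite ?enum_valK ?enum_rankK.
Qed.




Section Map.
Variables (V D : finType) (nd ed : D -> D) (vx : D -> V).
Hypothesis ndI : injective nd.
Hypothesis edK : involutive ed.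
Hypothesis edN : forall d, ed d != d.
Hypothesis vxE : forall d d', (vx d == vx d') = fconnect nd d d'.
Hypothesis face3 : forall d, order (face_perm nd ed) d = 3.

Local Notation phi := (face_perm nd ed).

Lemma edI : injective ed. Proof. exact: inv_inj. Qed.
Lemma phiI : injective phi.
Proof. by move=> x y /ndI /edI. Qed.

Definition isEr (d : D) : bool := (enum_rank d < enum_rank (ed d))%N.

Lemma isEr_ed d : isEr (ed d) = ~~ isEr d.
Proof.
rewrite /isEr edK ltnNge leq_eqVlt negb_or; case: ltnP => //= _; rewrite ?andbF ?andbT //.
by rewrite eq_sym (inj_eq val_inj) (inj_eq enum_rank_inj) edN.
Qed.

Definition Er : {pred D} := [pred d | isEr d].
Definition nE := #|Er|.
Definition ee (i : 'I_nE) : D := enum_val i.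

Lemma sum_edges (F : D -> 'F_2) :
  \sum_d F d = \sum_(i < nE) (F (ee i) + F (ed (ee i))).
Proof.
rewrite big_split /= /ee.
rewrite -(big_enum_val_cond (A := Er) xpredT F).
rewrite -(big_enum_val_cond (A := Er) xpredT (fun d => F (ed d))).
rewrite (bigID (fun d => isEr d)) /=; congr (_ + _).
  by apply: eq_bigl => d; rewrite andbT.
rewrite (reindex_inj edI) /=; apply: eq_bigl => d.
by rewrite isEr_ed negbK andbT.
Qed.

Lemma vx_nd d : vx (nd d) = vx d.
Proof. by apply/esym/eqP; rewrite vxE fconnect1. Qed.

Lemma vx_phi d : vx (phi d) = vx (ed d).
Proof. by rewrite /face_perm vx_nd. Qed.

Lemma phi3 d : phi (phi (phi d)) = d.
Proof. by have := iter_order phiI d; rewrite face3. Qed.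

Lemma orbit_phi d : orbit phi d = [:: d; phi d; phi (phi d)].
Proof. by rewrite /orbit face3. Qed.

Lemma fconn_phi d d' : fconnect phi d d' = (d' \in [:: d; phi d; phi (phi d)]).
Proof. by rewrite fconnect_orbit orbit_phi. Qed.

Lemma uniq_face d : uniq [:: d; phi d; phi (phi d)].
Proof. by rewrite -orbit_phi orbit_uniq. Qed.

Lemma sum_face r (F : D -> 'F_2) :
  \sum_d b2f (fconnect phi r d) * F d = F r + F (phi r) + F (phi (phi r)).
Proof.
under eq_bigr do rewrite b2f_mul.
rewrite -big_mkcond /=.
under eq_bigl do rewrite fconn_phi.
by rewrite -big_uniq ?uniq_face // !big_cons big_nil /= addr0 addrA.
Qed.

Definition Fr : {pred D} := [pred d | froots phi d].
Definition nF := #|Fr|.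
Definition ff (j : 'I_nF) : D := enum_val j.
Definition nV := #|V|.

Definition inc : 'M['F_2]_(nE, nV) :=
  \matrix_(i, j) (b2f (vx (ee i) == enum_val j) + b2f (vx (ed (ee i)) == enum_val j)).
Definition fc : 'M['F_2]_(nF, nE) :=
  \matrix_(j, i) (b2f (fconnect phi (ff j) (ee i)) + b2f (fconnect phi (ff j) (ed (ee i)))).

Lemma fc_inc : fc *m inc = 0.
Proof.
apply/matrixP => j v; rewrite !mxE.
set r := ff j; set w := enum_val v.
pose B d := b2f (vx d == w) + b2f (vx (ed d) == w).
pose G d := b2f (fconnect phi r d) * B d.
transitivity (\sum_i (G (ee i) + G (ed (ee i)))).
  apply: eq_bigr => i _; rewrite !mxE /G /B edK; ring.
rewrite -sum_edges /G sum_face /B -!vx_phi phi3.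
exact: F2_tri.
Qed.




Hypothesis conn : forall d d', connect (dart_link nd ed) d d'.
Hypothesis vx_surj : forall v, exists d, vx d = v.

Lemma dl_const (T : eqType) (P : D -> T) :
  (forall d, P (nd d) = P d) -> (forall d, P (ed d) = P d) -> forall d d', P d = P d'.
Proof.
move=> Hn He d d'; case/connectP: (conn d d') => p.
elim: p d => [|x p IH] d /=; first by move=> _ ->.
by case/andP => /orP[]/eqP -> /IH Hp /Hp <-; rewrite ?Hn ?He.
Qed.

Lemma Er_ee d : d \in Er -> exists i, d = ee i.
Proof. by move=> Hd; exists (enum_rank_in Hd d); rewrite /ee enum_rankK_in. Qed.

Lemma sym_from_reps (P : D -> 'F_2) :
  (forall i, P (ee i) = P (ed (ee i))) -> forall d, P (ed d) = P d.
Proof.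
move=> H d; case Hd: (isEr d).
  by have [i ->] := Er_ee (d := d) Hd; rewrite H.
have Hd' : ed d \in Er by rewrite inE isEr_ed Hd.
by have [i Hi] := Er_ee Hd'; rewrite Hi H -Hi edK.
Qed.

Lemma const_sub n (y : 'rV['F_2]_n) c : (forall j, y 0 j = c) -> (y <= (const_mx 1 : 'rV_n))%MS.
Proof.
move=> H; have -> : y = c *: const_mx 1 by apply/rowP => j; rewrite !mxE H mulr1.
exact: scalemx_sub.
Qed.

Lemma ker_inc : (kermx inc^T <= (const_mx 1 : 'rV_nV))%MS.
Proof.
apply/row_subP => k; set y := row k (kermx inc^T).
have Hy : y *m inc^T = 0 by apply/sub_kermxP; exact: row_sub.
pose Y (v : V) : 'F_2 := y 0 (enum_rank v).
have HY : forall i, Y (vx (ee i)) = Y (vx (ed (ee i))).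
  move=> i; apply: F2_eq; have := congr1 (fun m : 'M['F_2]_(1, nE) => m 0 i) Hy; rewrite !mxE => <-.
  have -> : \sum_j y 0 j * inc^T j i = \sum_v Y v * inc^T (enum_rank v) i.
    by rewrite -[in RHS]sum_ev; apply: eq_bigr => j _; rewrite /Y !enum_valK.
  rewrite -(sum_pick Y (vx (ee i))) -(sum_pick Y (vx (ed (ee i)))).
  rewrite -big_split; apply: eq_bigr => v _; rewrite !mxE enum_rankK /Y /=; ring.
have Hc : forall d d', Y (vx d) = Y (vx d').
  apply: (@dl_const _ (fun d => Y (vx d))) => d; first by rewrite /= vx_nd.
  exact: (sym_from_reps (P := fun d => Y (vx d)) HY d).
case: (pickP (fun _ : D => true)) => [d0 _ | none].
  apply: (const_sub (c := Y (vx d0))) => j.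
  have [d Hd] := vx_surj (enum_val j).
  by rewrite -(Hc d) Hd /Y enum_valK.
apply: (const_sub (c := 0)) => j.
by have [d _] := vx_surj (enum_val j); have := none d.
Qed.

Lemma ker_fc : (kermx fc <= (const_mx 1 : 'rV_nF))%MS.
Proof.
apply/row_subP => k; set a := row k (kermx fc).
have Ha : a *m fc = 0 by apply/sub_kermxP; exact: row_sub.
pose P d := \sum_j a 0 j * b2f (fconnect phi (ff j) d).
have HP : forall i, P (ee i) = P (ed (ee i)).
  move=> i; apply: F2_eq; have := congr1 (fun m : 'M['F_2]_(1, nE) => m 0 i) Ha; rewrite !mxE => <-.
  rewrite /P -big_split; apply: eq_bigr => j _; rewrite !mxE /=; ring.
have Hphi : forall d, P (phi d) = P d.
  by move=> d; apply: eq_bigr => j _; rewrite -(same_fconnect1_r phiI).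
have Hc : forall d d', P d = P d'.
  apply: dl_const => d; last by apply: sym_from_reps.
  by rewrite -{1}[d]edK -/(phi (ed d)) Hphi (sym_from_reps HP).
have Hff : forall j, P (ff j) = a 0 j.
  move=> j; rewrite /P -[RHS](sum_pick (fun j' => a 0 j') j).
  apply: eq_bigr => j1 _; rewrite mulrC; congr (b2f _ * _).
  apply/idP/idP; last by move/eqP ->; exact: connect0.
  move=> Hcon; apply/eqP; apply: enum_val_inj.
  have r1 : froots phi (ff j) by have := enum_valP j.
  have r2 : froots phi (ff j1) by have := enum_valP j1.
  rewrite -/(ff j) -/(ff j1) -(eqP r1) -(eqP r2).
  have Hs : connect_sym (frel phi) := fconnect_sym phiI.
  apply/eqP; rewrite (root_connect Hs) fconnect_sym //; exact: phiI.
case: (pickP (fun _ : D => true)) => [d0 _ | none].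
  by apply: (const_sub (c := P d0)) => j; rewrite -Hff (Hc _ d0).
apply: (const_sub (c := 0)) => j.
by have := none (ff j).
Qed.

Hypothesis euler : 2 * #|V| + 2 * fcard phi (predT : {pred D}) = #|D| + 4.

Lemma cardD2 : #|D| = (nE + nE)%N.
Proof.
rewrite -(cardC Er); congr (_ + _)%N.
have -> : #|[predC Er]| = #|ed @^-1: [set d | isEr d]|.
  by apply: eq_card => d; rewrite !inE isEr_ed.
rewrite card_preimset; last exact: edI.
by apply: eq_card => d; rewrite !inE.
Qed.

Lemma fcardE : fcard phi (predT : {pred D}) = nF.
Proof. by apply: eq_card => d; rewrite !inE andbT. Qed.

Lemma eulerE : (nV + nF = nE + 2)%N.
Proof.
have := euler; rewrite cardD2 fcardE /nV => H.
lia.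
Qed.

Lemma rank_sum : (nE <= \rank inc + \rank fc)%N.
Proof.
have h1 := mxrank_ker inc^T; have h2 := mxrank_ker fc.
have k1 : (\rank (kermx inc^T) <= 1)%N.
  by apply: leq_trans (mxrankS ker_inc) _; exact: rank_leq_row.
have k2 : (\rank (kermx fc) <= 1)%N.
  by apply: leq_trans (mxrankS ker_fc) _; exact: rank_leq_row.
rewrite mxrank_tr in h1.
have l1 := rank_leq_col inc; have l2 := rank_leq_row fc.
have := eulerE; move: h1 h2 k1 k2 l1 l2.
rewrite /nV => -> ->; lia.
Qed.

Lemma cut_of (s : 'rV['F_2]_nE) : s *m fc^T = 0 -> exists y : 'rV_nV, s = y *m inc^T.
Proof.
move=> Hs; apply/submxP.
have sub1 : (inc^T <= kermx fc^T)%MS.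
  by apply/sub_kermxP; rewrite -trmx_mul fc_inc trmx0.
have sub2 : (kermx fc^T <= inc^T)%MS.
  rewrite -(mxrank_leqif_sup sub1).2 mxrank_ker !mxrank_tr; apply/eqP.
  have := rank_sum; have := rank_leq_row fc; have := mxrankS sub1.
  rewrite mxrank_ker !mxrank_tr; lia.
apply: submx_trans sub2; exact/sub_kermxP.
Qed.

Lemma cycle_of (z : 'rV['F_2]_nE) : z *m inc = 0 -> exists a : 'rV_nF, z = a *m fc.
Proof.
move=> Hz; apply/submxP.
have sub1 : (fc <= kermx inc)%MS by apply/sub_kermxP; exact: fc_inc.
have sub2 : (kermx inc <= fc)%MS.
  rewrite -(mxrank_leqif_sup sub1).2 mxrank_ker; apply/eqP.
  have := rank_sum; have := rank_leq_col inc; have := mxrankS sub1.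
  rewrite mxrank_ker; rewrite /nV; lia.
apply: submx_trans sub2; exact/sub_kermxP.
Qed.

Variable S : {set D}.
Hypothesis S_ed : forall d, (d \in S) = (ed d \in S).
Hypothesis S_face : forall d0, #|[set d in S | fconnect phi d0 d]| = 2%N.

Lemma all_from_reps (Q : D -> Prop) :
  (forall d, Q (ed d) -> Q d) -> (forall i, Q (ee i)) -> forall d, Q d.
Proof.
move=> Hed H d; case Hd: (isEr d).
  by have [i ->] := Er_ee (d := d) Hd.
have Hd' : ed d \in Er by rewrite inE isEr_ed Hd.
by have [i Hi] := Er_ee Hd'; apply: Hed; rewrite Hi.
Qed.

Lemma inc_entry (y : 'rV['F_2]_nV) i :
  (y *m inc^T) 0 i = y 0 (enum_rank (vx (ee i))) + y 0 (enum_rank (vx (ed (ee i)))).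
Proof.
pose Y (v : V) : 'F_2 := y 0 (enum_rank v).
rewrite mxE.
have -> : \sum_j y 0 j * inc^T j i = \sum_v Y v * inc^T (enum_rank v) i.
  by rewrite -[in RHS]sum_ev; apply: eq_bigr => j _; rewrite /Y !enum_valK.
rewrite -[y 0 (enum_rank (vx (ee i)))]/(Y (vx (ee i))) -[y 0 (enum_rank (vx (ed (ee i))))]/(Y (vx (ed (ee i)))).
rewrite -(sum_pick Y (vx (ee i))) -(sum_pick Y (vx (ed (ee i)))).
rewrite -big_split; apply: eq_bigr => v _; rewrite !mxE enum_rankK /Y /=; ring.
Qed.

Lemma coloring : exists col : V -> 'F_2, forall d, d \in S -> col (vx d) != col (vx (ed d)).
Proof.
pose s : 'rV['F_2]_nE := \row_i b2f (ee i \in S).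
have Hs : s *m fc^T = 0.
  apply/rowP => j; rewrite [RHS]mxE mxE.
  pose G d := b2f (fconnect phi (ff j) d) * b2f (d \in S).
  transitivity (\sum_i (G (ee i) + G (ed (ee i)))).
    by apply: eq_bigr => i _; rewrite !mxE /G -S_ed /=; ring.
  rewrite -sum_edges /G.
  set T := [set d in S | fconnect phi (ff j) d].
  transitivity (\sum_(d in T) (1 : 'F_2)).
    rewrite [RHS]big_mkcond /=; apply: eq_bigr => d _; rewrite !inE.
    by case: (d \in S); case: (fconnect _ _ _); rewrite /b2f /= ?mulr1 ?mulr0.
  by rewrite sumr_const /T S_face mulr2n F2_1p1.
have [y Hy] := cut_of Hs.
exists (fun v => y 0 (enum_rank v)).
have H : forall d, b2f (d \in S) = y 0 (enum_rank (vx d)) + y 0 (enum_rank (vx (ed d))).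
  apply: all_from_reps.
    by move=> d; rewrite -S_ed edK addrC.
  by move=> i; have := congr1 (fun z : 'rV_nE => z 0 i) Hy; rewrite /= inc_entry mxE.
move=> d Hd; apply/eqP => E; have := H d; rewrite Hd E addff /b2f /=.
by move/eqP; rewrite oner_eq0.
Qed.

Variable sl : seq D.
Hypothesis sl_size : (size sl <= 2)%N.
Hypothesis sl_cov : forall d, has (fun x => connect (factor_link nd ed S) x d) sl.

Definition Pa (a : 'rV['F_2]_nF) d := \sum_j a 0 j * b2f (fconnect phi (ff j) d).

Lemma afc_entry (a : 'rV['F_2]_nF) i : (a *m fc) 0 i = Pa a (ee i) + Pa a (ed (ee i)).
Proof. by rewrite mxE /Pa -big_split; apply: eq_bigr => j _; rewrite !mxE /=; ring. Qed.

Lemma Pa_phi a d : Pa a (phi d) = Pa a d.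
Proof. by apply: eq_bigr => j _; rewrite -(same_fconnect1_r phiI). Qed.

Lemma fl_const (P : D -> 'F_2) : (forall d, P (phi d) = P d) ->
  (forall d, d \in S -> P (ed d) = P d) ->
  forall x y, connect (factor_link nd ed S) x y -> P x = P y.
Proof.
move=> Hp HS x y /connectP [p]; elim: p x => [|z p IH] x /=; first by move=> _ ->.
case/andP => Hxz /IH Hp' /Hp' <-.
case/orP: Hxz => [|/andP[Hx /eqP ->]]; last by rewrite HS.
rewrite fconn_phi !inE => /orP[/eqP->|/orP[/eqP->|/eqP->]] //; by rewrite ?Hp.
Qed.

Lemma U_cycles : exists w : 'rV['F_2]_nE, forall z : 'rV_nE, z *m inc = 0 ->
  (forall i, ee i \in S -> z 0 i = 0) -> exists g, z = g *: w.
Proof.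
case Esl: sl => [|c1 rest].
  exists 0 => z _ _; exists 0; apply/rowP => i.
  by have := sl_cov (ee i); rewrite Esl.
set c2 := head c1 rest.
have cov : forall d, connect (factor_link nd ed S) c1 d || connect (factor_link nd ed S) c2 d.
  move=> d; have := sl_cov d; have := sl_size; rewrite Esl /c2.
  clear c2; case: rest {Esl} => [|c [|c' r]] /=.
  - by rewrite orbF orbb.
  - by rewrite orbF.
  - by [].
pose chi d := b2f (connect (factor_link nd ed S) c1 d).
exists (\row_i (chi (ee i) + chi (ed (ee i)))) => z Hz HS.
have [a Ha] := cycle_of Hz.
have HPS : forall d, d \in S -> Pa a (ed d) = Pa a d.
  have Hrep : forall i, ee i \in S -> Pa a (ee i) = Pa a (ed (ee i)).
    move=> i Hi; apply: F2_eq; rewrite -afc_entry -Ha; exact: HS.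
  move=> d Hd; case Hr: (isEr d).
    by have [i Ei] := Er_ee (d := d) Hr; rewrite Ei -Hrep // -Ei.
  have Hd' : ed d \in Er by rewrite inE isEr_ed Hr.
  have [i Ei] := Er_ee Hd'.
  by rewrite Ei Hrep -?Ei ?edK // -S_ed.
have Hc := fl_const (Pa_phi a) HPS.
set g := Pa a c1 + Pa a c2.
have HP : forall d, Pa a d = Pa a c2 + chi d * g.
  move=> d; rewrite /chi; case/orP: (cov d) => [H1|H2].
    rewrite H1 /b2f mul1r /g -(Hc _ _ H1); have := addff (Pa a c2); move=> E.
    by rewrite addrA (addrC (Pa a c2)) -addrA E addr0.
  case H1: (connect _ c1 d); rewrite /b2f /= ?mul0r ?addr0.
    rewrite mul1r /g -(Hc _ _ H1); have := addff (Pa a c2); move=> E.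
    by rewrite addrA (addrC (Pa a c2)) -addrA E addr0.
  by rewrite (Hc _ _ H2).
exists g; apply/rowP => i; rewrite Ha afc_entry [RHS]mxE [X in g * X]mxE (HP (ee i)) (HP (ed (ee i))).
have E := addff (Pa a c2).
transitivity (g * (chi (ee i) + chi (ed (ee i))) + (Pa a c2 + Pa a c2)); first by ring.
by rewrite E addr0 mulrC.
Qed.

Hypothesis vx_ed : forall d, vx (ed d) != vx d.

Lemma er_eq (T : finType) (x : T) (j : 'I_#|T|) : (enum_rank x == j) = (x == enum_val j).
Proof. by apply/eqP/eqP => [<-|->]; rewrite ?enum_rankK ?enum_valK. Qed.

Definition uu i := enum_rank (vx (ee i)).
Definition ww i := enum_rank (vx (ed (ee i))).
Lemma uw_neq i : uu i != ww i.
Proof. by rewrite /uu /ww (inj_eq enum_rank_inj) eq_sym vx_ed. Qed.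

Lemma inc_ginc : inc = ginc uu ww.
Proof. by apply/matrixP => i j; rewrite !mxE /uu /ww !er_eq. Qed.

Lemma gsel_ex : exists gsel : 'I_nV -> option 'I_nE,
  (forall j i, gsel j = Some i -> incid uu ww i j) /\
  (forall i, ee i \notin S -> exists j, gsel j = Some i).
Proof.
have [w Hw] := U_cycles.
set U := [set i | ee i \notin S].
have HU : forall z, z *m ginc uu ww = 0 -> (forall i, i \notin U -> z 0 i = 0) -> exists g, z = g *: w.
  move=> z Hz Hs; apply: Hw; first by rewrite inc_ginc.
  by move=> i Hi; apply: Hs; rewrite inE Hi.
case: (pickP (fun _ : 'I_nE => true)) => [i1 _|none]; last first.
  by exists (fun _ => None); split => // i; have := none i.
have [w0|wN] := eqVneq w 0.
  have Hac : acyclic uu ww U.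
    by move=> z Hz Hs; have [g ->] := HU z Hz Hs; rewrite w0 scaler0.
  have [sel [H1 H2]] := forest_sel uw_neq (uu i1) Hac.
  exists sel; split; first by move=> j i /H1 [].
  by move=> i Hi; apply: H2; rewrite inE.
have [i0 Hi0] : exists i0, w 0 i0 != 0.
  case: (pickP (fun i => w 0 i != 0)) => [i0 H|H]; first by exists i0.
  move: wN; rewrite (_ : w = 0) ?eqxx //; apply/rowP => i.
  by have := H i; rewrite mxE => /negbFE/eqP.
set R0 := U :\ i0.
have Hac : acyclic uu ww R0.
  move=> z Hz Hs.
  have Hs' : forall i, i \notin U -> z 0 i = 0.
    by move=> i Hi; apply: Hs; apply: contra Hi => /setD1P [].
  have [g Eg] := HU z Hz Hs'.
  have : z 0 i0 = 0 by apply: Hs; rewrite !inE eqxx.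
  rewrite Eg mxE => /eqP; rewrite mulf_eq0 (negbTE Hi0) orbF => /eqP ->.
  by rewrite scale0r.
have [sel [H1 H2]] := forest_sel uw_neq (uu i0) Hac.
exists (fun j => if j == uu i0 then Some i0 else sel j); split.
  move=> j i; case: (j =P uu i0) => [-> [<-]|_ /H1 []//].
  by rewrite /incid eqxx.
move=> i Hi; case: (i =P i0) => [->|Hne]; first by exists (uu i0); rewrite eqxx.
have HiR : i \in R0 by rewrite !inE Hi andbT; exact/eqP.
have [j Hj] := H2 i HiR.
exists j; case: (j =P uu i0) => [E|//].
by have [_ _] := H1 _ _ Hj; rewrite E eqxx.
Qed.

Lemma sel_ex : exists sel : V -> option D,
  (forall v d, sel v = Some d -> vx d = v) /\
  (forall d, d \notin S -> sel (vx d) = Some d \/ sel (vx (ed d)) = Some (ed d)).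
Proof.
have [gsel [G1 G2]] := gsel_ex.
exists (fun v => if gsel (enum_rank v) is Some i then
          Some (if uu i == enum_rank v then ee i else ed (ee i)) else None); split.
  move=> v d; case E: (gsel _) => [i|//] [<-].
  have := G1 _ _ E; rewrite /incid /uu /ww.
  case: ifP => [/eqP H _|_ /= /eqP H]; exact: enum_rank_inj.
have Hrep : forall i, ee i \notin S ->
    (if gsel (enum_rank (vx (ee i))) is Some i' then
       Some (if uu i' == enum_rank (vx (ee i)) then ee i' else ed (ee i')) else None) = Some (ee i) \/
    (if gsel (enum_rank (vx (ed (ee i)))) is Some i' then
       Some (if uu i' == enum_rank (vx (ed (ee i))) then ee i' else ed (ee i')) else None) = Some (ed (ee i)).
  move=> i Hi; have [j Hj] := G2 i Hi.
  have := G1 _ _ Hj; rewrite /incid; case/orP => /eqP Ej.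
    by left; rewrite -/(uu i) Ej Hj -Ej eqxx.
  right; rewrite -/(ww i) Ej Hj -Ej.
  by rewrite (negbTE (uw_neq i)).
move=> d Hd; case Hr: (isEr d).
  have [i Ei] := Er_ee (d := d) Hr; subst d; exact: Hrep.
have Hd' : ed d \in Er by rewrite inE isEr_ed Hr.
have [i Ei] := Er_ee Hd'.
have Hi : ee i \notin S by rewrite -Ei -S_ed.
have := Hrep i Hi; rewrite -Ei edK; by case; [right|left].
Qed.
End Map.

Local Close Scope ring_scope.

Theorem corollary3p6 (VG : finType) (adjG : rel VG) (V D : finType)
    (nd ed : D -> D) (vx : D -> V) :
  simple_graph adjG ->
  plane_triangulation nd ed vx ->
  is_subgraph adjG (map_adj ed vx) ->
  (exists S : {set D}, dual_two_factor nd ed S /\ at_most_cycles nd ed S 2) ->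
  robust_chi_le adjG 2.
Proof.
move=> [Gsym Girr] [ndI [edK edN] [vxE vx_surj] [conn euler] [face3 [vx_ed _]]]
  [h [hI hadj]] [S [[S_ed S_face] [sl [sl_size sl_cov]]]].
have [col Hcol] := coloring ndI edK edN vxE face3 conn vx_surj euler S_ed S_face.
have [sel [Hsel1 Hsel2]] := sel_ex ndI edK edN vxE face3 conn vx_surj euler S_ed sl_size sl_cov vx_ed.
pose f (x : VG) : option VG :=
  if sel (h x) is Some d then [pick y | adjG x y && (h y == vx (ed d))] else None.
exists f; split.
  move=> x y; rewrite /f; case: (sel (h x)) => [d|//].
  by case: pickP => [y' /andP[Hy' _] [<-]|].
exists (fun x => (col (h x) : 'I_2)) => x y /andP[Hxy Hdel].
have [d /andP[/eqP Hd1 /eqP Hd2]] := existsP (hadj x y Hxy).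
case HdS: (d \in S).
  by have := Hcol d HdS; rewrite Hd1 Hd2.
have fsel : forall a b d', sel (h a) = Some d' -> adjG a b -> vx (ed d') = h b -> f a = Some b.
  move=> a b d' Ha Hab Hb; rewrite /f Ha.
  case: pickP => [b' /andP[_ /eqP Hb']|H]; first by congr Some; apply: hI; rewrite Hb' Hb.
  by have := H b; rewrite Hab Hb eqxx.
exfalso; move: Hdel; rewrite /deleted.
case: (Hsel2 d (negbT HdS)) => Hs.
  by rewrite Hd1 in Hs; rewrite (fsel x y d Hs Hxy Hd2) eqxx.
rewrite Hd2 in Hs; have Hyx : adjG y x by rewrite Gsym.
have Hb : vx (ed (ed d)) = h x by rewrite edK.
by rewrite (fsel y x (ed d) Hs Hyx Hb) eqxx orbT.
Qed.
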